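(* Consider an instance of $P|G=\textit{block graph},p_j=1|C_{\max}$ with $m\ge 2$ identical machines and $n\ge 1$ unit-time jobs whose block conflict graph $G$ has $\omega(G)\le m$, and write $n=d(m-1)+r$ with integers $d\ge 0$ and $r\in\{0,\dots,m-2\}$. The greedy algorithm described in the context returns a schedule in which every machine is assigned at most $\lceil n/(m-1)\rceil$ jobs. Moreover, if $r=0$ then at least one machine is assigned strictly fewer than $\lceil n/(m-1)\rceil$ jobs, and if $r>0$ then at least $m-r$ machines are assigned strictly fewer than $\lceil n/(m-1)\rceil$ jobs.
   Context: Scheduling with a conflict graph: jobs $J$, machines $M=\{M_1,\dots,M_m\}$, conflict graph $G=(J,E)$; a schedule is a map $\sigma:J\to M$ with adjacent jobs on different machines. Here all processing times are $1$, so a machine's load is the number of jobs assigned to it. A block graph is a graph in which every maximal 2-connected component is a clique; a block is a maximal clique; a cut-vertex is a vertex in at least two blocks. The block-cut forest $T_G$ has a node for each block and each cut-vertex, with a block node adjacent to a cut-vertex node iff the cut-vertex lies in the block; each component is rooted arbitrarily. Greedy algorithm: list the blocks in the order of a pre-order traversal of (each component of) the rooted block-cut forest. Process the blocks in this order. For the current block $B$, let $L_J$ be the jobs of $B$ (sorted by non-increasing processing time) and let $L_M$ be the $|B|$ machines of smallest current load, sorted by non-decreasing current load (ties broken arbitrarily). If $B$ has a parent cut-vertex $u$ in $T_G$ that has already been assigned to some machine $M'$, then: if $M'\in L_M$ remove $M'$ from $L_M$, otherwise remove the last machine of $L_M$; and remove $u$ from $L_J$. Then assign the $i$-th job of $L_J$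 to the $i$-th machine of $L_M$ for $i=1,\dots,|L_M|$, updating loads. *)

(* Defs.v *)
From mathcomp Require Import all_boot.
Set Implicit Arguments.
Unset Strict Implicit.
Unset Printing Implicit Defensive.

Section Graphs.
Variables (T : finType) (e : rel T).

Definition restr (S : {set T}) : rel T :=
  fun a b => [&& a \in S, b \in S & e a b].
Definition connected_in (S : {set T}) : Prop :=
  forall x y, x \in S -> y \in S -> connect (restr S) x y.
Definition nonseparable (S : {set T}) : Prop :=
  [/\ S != set0, connected_in S & forall v, v \in S -> connected_in (S :\ v)].
Definition max_nonseparable (S : {set T}) : Prop :=
  nonseparable S /\ (forall S', nonseparable S' -> S \subset S' -> S' = S).
Definition is_clique (S : {set T}) : Prop :=
  forall x y, x \in S -> y \in S -> x != y -> e x y.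
Definition block_graph : Prop :=
  forall S, max_nonseparable S -> is_clique S.
Definition is_block (B : {set T}) : Prop :=
  [/\ B != set0, is_clique B & forall C, is_clique C -> B \subset C -> C = B].
Definition is_cut (v : T) : Prop :=
  exists B1 B2, [/\ is_block B1, is_block B2, B1 != B2, v \in B1 & v \in B2].
Definition clique_bound (k : nat) : Prop :=
  forall S, is_clique S -> #|S| <= k.

(* block-cut forest: nodes are blocks (inl) and cut-vertices (inr) *)
Definition bc_node := ({set T} + T)%type.
Definition in_bc (x : bc_node) : Prop :=
  match x with inl B => is_block B | inr v => is_cut v end.
Definition bc_adj (x y : bc_node) : bool :=
  match x, y with
  | inl B, inr v => v \in B
  | inr v, inl B => v \in B
  | _, _ => false
  end.

(* a rooting of the block-cut forest, given by a parent function: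
   every forest edge is oriented child -> parent, and there are no cycles *)
Definition rooting (par : bc_node -> option bc_node) : Prop :=
  [/\ forall x y, par x = Some y -> [/\ in_bc x, in_bc y & bc_adj x y],
      forall x y, in_bc x -> in_bc y -> bc_adj x y -> par x = Some y \/ par y = Some x
    & exists dep : bc_node -> nat, forall x y, par x = Some y -> dep y < dep x].

(* desc par x y : y is a descendant of x (or x itself) *)
Definition desc (par : bc_node -> option bc_node) (x y : bc_node) : bool :=
  connect (fun a b : bc_node => par a == Some b) y x.

(* s is a pre-order traversal of the rooted forest: it lists every node
   exactly once, and the descendants of each node form a contiguous
   segment of s starting at that node *)
Definition preorder (par : bc_node -> option bc_node) (s : seq bc_node) : Prop :=
  [/\ uniq s, forall x, x \in s <-> in_bc x,
      forall x y, x \in s -> y \in s -> desc par x y -> index x s <= index y s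
    & forall x y z, x \in s -> y \in s -> z \in s -> desc par x y ->
        index x s <= index z s -> index z s <= index y s -> desc par x z].

Definition parent_cut (par : bc_node -> option bc_node) (x : bc_node) : option T :=
  match par x with Some (inr u) => Some u | _ => None end.

Definition block_seq (par : bc_node -> option bc_node) (s : seq bc_node)
  : seq ({set T} * option T) :=
  pmap (fun x => match x with
                 | inl B => Some (B, parent_cut par x)
                 | inr _ => None end) s.

Variable m : nat.

Definition load (s : T -> option 'I_m) (M : 'I_m) : nat :=
  #|[set x | s x == Some M]|.

(* the modification of L_J, L_M for an already assigned parent cut-vertex *)
Definition adjust (s : T -> option 'I_m) (pu : option T)
    (LJ : seq T) (LM : seq 'I_m) : seq T * seq 'I_m :=
  match pu with
  | Some u =>
      match s u with
      | Some M' => (rem u LJ,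
                    if M' \in LM then rem M' LM else take (size LM).-1 LM)
      | None => (LJ, LM)
      end
  | None => (LJ, LM)
  end.

(* one greedy step on block B with parent cut-vertex pu; all tie breaking
   (order of jobs, choice/order of least loaded machines) is arbitrary *)
Definition gstep (s s' : T -> option 'I_m) (B : {set T}) (pu : option T) : Prop :=
  exists (LJ : seq T) (LM : seq 'I_m),
    [/\ perm_eq LJ (enum B), uniq LM, size LM = #|B|,
        (sorted (fun a b => load s a <= load s b) LM /\
        (forall M M', M \in LM -> M' \notin LM -> load s M <= load s M')) &
        (forall x, s' x =
          if x \in (adjust s pu LJ LM).1
          then nth None (map Some (adjust s pu LJ LM).2)
                   (index x (adjust s pu LJ LM).1)
          else s x)].

Fixpoint grun (s : T -> option 'I_m) (bs : seq ({set T} * option T))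
    (s' : T -> option 'I_m) : Prop :=
  match bs with
  | [::] => forall x, s' x = s x
  | (B, pu) :: r => exists s1, gstep s s1 B pu /\ grun s1 r s'
  end.

Definition greedy_output (out : T -> option 'I_m) : Prop :=
  exists (par : bc_node -> option bc_node) (s : seq bc_node),
    [/\ rooting par, preorder par s & grun (fun _ => None) (block_seq par s) out].

End Graphs.

Definition ceil_div (n k : nat) : nat := (n + k.-1) %/ k.

(* Main.v *)
Require Import Defs.
From mathcomp Require Import all_boot zify.
Set Implicit Arguments.
Unset Strict Implicit.
Unset Printing Implicit Defensive.

Definition hc m (l : 'I_m -> nat) t := #|[set M | t <= l M]|.
Definition InvL m (l : 'I_m -> nat) N :=
  forall t, 0 < t -> 0 < hc l t -> (m-1)*(t-1) + hc l t <= N.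

Lemma card_le1 m (Mx : option 'I_m) : #|[set M | Some M == Mx]| <= 1.
Proof.
case: Mx => [M1|].
  have -> : [set M | Some M == Some M1] = [set M1] by apply/setP=> M; rewrite !inE.
  by rewrite cards1.
have -> : [set M : 'I_m | Some M == None] = set0 by apply/setP=> M; rewrite !inE.
by rewrite cards0.
Qed.

Lemma inv_step m (l l' : 'I_m -> nat) (b : seq 'I_m) N (Mx : option 'I_m) :
  uniq b -> (forall M, l' M = l M + (M \in b)) ->
  (forall M M2, M \in b -> M2 \notin b -> Some M2 != Mx -> l M <= l M2) ->
  InvL l N -> InvL l' (N + size b).
Proof.
move=> ub hl hS inv t t0 h0.
set Bs := [set M | M \in b].
have cB : #|Bs| = size b by rewrite cardsE; apply/card_uniqP.
case: (posnP (hc l t)) => [ht0|htp]; last first.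
  have sub : [set M | t <= l' M] \subset [set M | t <= l M] :|: Bs.
    apply/subsetP=> M; rewrite !inE hl.
    by case: (M \in b) => /=; [rewrite orbT | rewrite addn0 => ->].
  have := subset_leq_card sub; rewrite cardsU cB => hle.
  have := inv t t0 htp; rewrite /hc in hle * => hi.
  lia.
have lt : forall M, l M < t.
  move=> M; move/eqP: ht0; rewrite cards_eq0 => /eqP /setP /(_ M).
  by rewrite !inE ltnNge => ->.
have sub : [set M | t <= l' M] \subset Bs.
  apply/subsetP=> M; rewrite !inE hl; have := lt M.
  by case: (M \in b) => //; rewrite addn0 ltnNge => /negbTE ->.
have hb := subset_leq_card sub; rewrite cB in hb.
case: (ltnP 1 t) => t1; last first.
  have -> : t - 1 = 0 by lia.
  rewrite muln0 add0n; apply: leq_trans hb _; exact: leq_addl.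
move: h0; rewrite /hc card_gt0 => /set0Pn [M0]; rewrite inE => HM0.
have M0b : M0 \in b by have := subsetP sub M0; rewrite !inE; apply.
have lM0 : l M0 = t - 1 by have := lt M0; move: HM0; rewrite hl M0b; lia.
set Ms := [set M | Some M == Mx].
have sub2 : [set M | t <= l' M] :|: (~: Bs :\: Ms) \subset [set M | t - 1 <= l M].
  apply/subsetP=> M; rewrite !inE => /orP [].
    rewrite hl; have := lt M; case: (M \in b) => /=; lia.
  move=> /andP [HM HMb]; rewrite -lM0; exact: hS.
have hp : 0 < hc l (t - 1).
  rewrite /hc card_gt0; apply/set0Pn; exists M0; by rewrite inE lM0.
have := inv (t - 1) (ltac:(lia)) hp.
have := subset_leq_card sub2.
rewrite cardsU.
have -> : [set M | t <= l' M] :&: (~: Bs :\: Ms) = set0.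
  apply/setP=> M; rewrite !inE; apply/negP=> /andP [H1 /andP [_ H2]].
  by have := subsetP sub M; rewrite !inE H1 => /(_ isT); rewrite (negbTE H2).
rewrite cards0 subn0 cardsD.
have c1 := card_le1 Mx.
have c2 : #|~: Bs :&: Ms| <= #|Ms| by apply: subset_leq_card; apply: subsetIr.
have c3 := cardsC Bs; rewrite card_ord cB in c3.
have e1 : (m-1)*(t-1) = (m-1)*(t-1-1) + (m-1).
  by rewrite -mulnSr; congr (_ * _); lia.
rewrite /hc -/Ms e1.
move: c1; rewrite -/Ms => c1; lia.
Qed.

Lemma adjust_facts (T : finType) m (s : T -> option 'I_m) (B : {set T}) pu
   (LJ : seq T) (LM : seq 'I_m) :
  (forall u, pu = Some u -> u \in B) ->
  (forall x, x \in B -> s x != None -> pu = Some x) ->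
  perm_eq LJ (enum B) -> uniq LM -> size LM = #|B| ->
  sorted (fun a b => load s a <= load s b) LM ->
  (forall M M', M \in LM -> M' \notin LM -> load s M <= load s M') ->
  let a := (adjust s pu LJ LM).1 in let b := (adjust s pu LJ LM).2 in
  [/\ uniq a /\ uniq b, size a = size b,
      forall x, x \in a -> x \in B /\ s x = None,
      forall x, x \in B -> x \notin a -> exists2 M', s x = Some M' & M' \notin b
    & exists Mx : option 'I_m, forall M M2, M \in b -> M2 \notin b -> Some M2 != Mx ->
        load s M <= load s M2].
Proof.
move=> Hu Hs pLJ uLM sLM srt hmin a b.
have uLJ : uniq LJ by rewrite (perm_uniq pLJ) enum_uniq.
have mLJ : forall x, (x \in LJ) = (x \in B) by move=> x; rewrite (perm_mem pLJ) mem_enum.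
have sLJ : size LJ = #|B| by rewrite (perm_size pLJ) cardE.
rewrite /a /b /adjust; clear a b.
case Epu: pu => [u|]; last first.
  split=> //; first by rewrite sLJ.
  - move=> x; rewrite mLJ => xB; split=> //; apply/eqP; apply/negP=> /negP H.
    by have := Hs x xB H; rewrite Epu.
  - by move=> x; rewrite mLJ => ->.
  by exists None => M M2 h1 h2 _; exact: hmin.
case Esu: (s u) => [M'|]; last first.
  split=> //; first by rewrite sLJ.
  - move=> x; rewrite mLJ => xB; split=> //; apply/eqP; apply/negP=> /negP H.
    have := Hs x xB H; rewrite Epu => -[Eu]; by move: H; rewrite -Eu Esu.
  - by move=> x; rewrite mLJ => ->.
  by exists None => M M2 h1 h2 _; exact: hmin.
have uB : u \in B by exact: Hu.
have uLJ' : u \in LJ by rewrite mLJ.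
have memLJ : forall x, (x \in rem u LJ) = (x != u) && (x \in B).
  by move=> x; rewrite (mem_rem_uniq _ uLJ) inE mLJ.
have Mb : M' \notin (if M' \in LM then rem M' LM else take (size LM).-1 LM).
  case: ifP => H; first by rewrite mem_rem_uniqF.
  by apply/negP=> /mem_take; rewrite H.
split.
- split; first exact: rem_uniq.
  by case: ifP => _; [exact: rem_uniq | exact: take_uniq].
- rewrite size_rem // sLJ; case: ifP => H; first by rewrite size_rem // sLM.
  have cB0 : 0 < #|B| by apply/card_gt0P; exists u.
  rewrite size_take sLM; case: #|B| cB0 => // n _.
  by rewrite /= ltnSn.
- move=> x; rewrite memLJ => /andP [xu xB]; split=> //.
  apply/eqP; apply/negP=> /negP H; have := Hs x xB H; rewrite Epu => -[Eu].
  by move: xu; rewrite Eu eqxx.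
- move=> x xB; rewrite memLJ xB andbT negbK => /eqP ->.
  by exists M'.
exists (Some M') => M M2 hM hM2; rewrite /= => hne.
case: ifP hM hM2 => H hM hM2.
  apply: hmin; first by move: hM; rewrite (mem_rem_uniq _ uLM) inE => /andP [].
  by move: hM2; rewrite (mem_rem_uniq _ uLM) inE hne.
have MLM : M \in LM by exact: mem_take hM.
case: (boolP (M2 \in LM)) => M2LM; last exact: hmin.
move: hM hM2; rewrite !in_take // -leqNgt => i1 i2.
have tr : transitive (fun a b => load s a <= load s b).
  by move=> x y z; apply: leq_trans.
have := sorted_ltn_nth tr M srt; rewrite /prop_in2 => H2.
have := H2 (index M LM) (index M2 LM).
rewrite !inE !index_mem MLM M2LM !nth_index //; apply=> //.
exact: leq_trans i1 i2.
Qed.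

Lemma assign_facts (T: finType) m (a : seq T) (b : seq 'I_m) (f : T -> option 'I_m) :
 uniq a -> uniq b -> size a = size b ->
 (forall x, x \in a -> f x = nth None (map Some b) (index x a)) ->
 [/\ forall x, x \in a -> exists2 M, f x = Some M & M \in b,
     forall x y, x \in a -> y \in a -> x != y -> f x != f y
   & forall M, #|[set x | (x \in a) && (f x == Some M)]| = (M \in b)].
Proof.
move=> ua ub sab hf.
case: b ub sab hf => [|M0 b'] ub sab hf.
  case: a ua sab hf => // ua _ hf; split=> // M.
  by rewrite in_nil; apply/eqP; rewrite cards_eq0; apply/eqP/setP=> x; rewrite !inE.
set b := M0 :: b' in ub sab hf *.
case: a ua sab hf => [//|x0 a'] ua sab hf.
set a := x0 :: a' in ua sab hf *.
have hf2 : forall x, x \in a -> f x = Some (nth M0 b (index x a)).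
  move=> x xa; rewrite hf // (nth_map M0) // -sab index_mem //.
split.
- move=> x xa; exists (nth M0 b (index x a)); first exact: hf2.
  by rewrite mem_nth // -sab index_mem.
- move=> x y xa ya xy; rewrite !hf2 //; apply/negP => /eqP [].
  have i1 : index x a < size b by rewrite -sab index_mem.
  have i2 : index y a < size b by rewrite -sab index_mem.
  move/eqP; rewrite (nth_uniq M0 i1 i2 ub) => /eqP hi.
  move: xy; by rewrite -(nth_index x0 xa) hi (nth_index x0 ya) eqxx.
move=> M; case: (boolP (M \in b)) => Mb; last first.
  apply/eqP; rewrite cards_eq0; apply/eqP/setP=> x; rewrite in_set in_set0.
  apply/negP=> /andP [xa /eqP]; rewrite hf2 // => -[E].
  change (nth M0 b (index x a) = M) in E.
  by move: Mb; rewrite -E mem_nth // -sab index_mem.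

set x1 := nth x0 a (index M b).
have ilt : index M b < size a by rewrite sab index_mem.
have -> : [set x | (x \in a) && (f x == Some M)] = [set x1].
  apply/setP=> x; rewrite !in_set; apply/idP/idP.
    move=> /andP [xa /eqP]; rewrite hf2 // => -[E].
    change (nth M0 b (index x a) = M) in E.
    rewrite /x1 -E index_uniq ?in_set1 ?nth_index // -sab index_mem //.
  rewrite in_set1 => /eqP ->; rewrite /x1 mem_nth //= hf2 ?mem_nth // index_uniq //.
  by rewrite nth_index.
by rewrite cards1.
Qed.

Lemma step_facts (T : finType) m (s s' : T -> option 'I_m) (B : {set T}) pu :
  (forall u, pu = Some u -> u \in B) ->
  (forall x, x \in B -> s x != None -> pu = Some x) ->
  gstep s s' B pu ->
  [/\ forall x, s x != None -> s' x = s x,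
      forall x, s' x != None -> s x != None \/ x \in B,
      forall x, x \in B -> s' x != None,
      forall x y, x \in B -> y \in B -> x != y -> s' x != s' y
    & InvL (load s) #|[set x | s x != None]| ->
      InvL (load s') #|[set x | s' x != None]| ].
Proof.
move=> Hu Hs [LJ [LM [pLJ uLM sLM [srt hmin] hs']]].
have := adjust_facts Hu Hs pLJ uLM sLM srt hmin.
move: hs'; set a := (adjust s pu LJ LM).1; set b := (adjust s pu LJ LM).2.
move=> hs' /= [[ua ub] sab F2 F3 [Mx F4]].
have hf : forall x, x \in a -> s' x = nth None (map Some b) (index x a).
  by move=> x xa; rewrite hs' xa.
have hn : forall x, x \notin a -> s' x = s x by move=> x xa; rewrite hs' (negbTE xa).
have [G1 G2 G3] := assign_facts ua ub sab hf.
have Fa : forall x, x \in a -> s x = None by move=> x xa; have [] := F2 x xa.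
split.
- move=> x sx; apply: hn; apply/negP=> xa; by move: sx; rewrite Fa.
- move=> x; case: (boolP (x \in a)) => xa; first by right; have [] := F2 x xa.
  by rewrite hn //; left.
- move=> x xB; case: (boolP (x \in a)) => xa; first by have [M -> _] := G1 x xa.
  by have [M' E _] := F3 x xB xa; rewrite hn // E.
- move=> x y xB yB xy; case: (boolP (x \in a)) => xa; case: (boolP (y \in a)) => ya.
  + exact: G2.
  + have [M' E nb] := F3 y yB ya; have [M E2 Mb] := G1 x xa.
    rewrite (hn y ya) E E2; apply/negP=> /eqP [EM]; by move: nb; rewrite -EM Mb.
  + have [M' E nb] := F3 x xB xa; have [M E2 Mb] := G1 y ya.
    rewrite (hn x xa) E E2; apply/negP=> /eqP [EM]; by move: nb; rewrite EM Mb.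
  + have [M' E _] := F3 x xB xa; have [M2 E2 _] := F3 y yB ya.
    have := Hs x xB; rewrite E => /(_ isT) Hx.
    have := Hs y yB; rewrite E2 => /(_ isT); rewrite Hx => -[Exy].
    by move: xy; rewrite Exy eqxx.
move=> inv.
have hl : forall M, load s' M = load s M + (M \in b).
  move=> M; rewrite /load -G3.
  have -> : [set x | s' x == Some M] =
            [set x | s x == Some M] :|: [set x | (x \in a) && (s' x == Some M)].
    apply/setP=> x; rewrite !in_set; case: (boolP (x \in a)) => xa /=.
      by rewrite Fa.
    by rewrite orbF hn.
  rewrite cardsU; have -> : [set x | s x == Some M] :&:
      [set x | (x \in a) && (s' x == Some M)] = set0.
    apply/setP=> x; rewrite !in_set; apply/negP=> /andP [/eqP E /andP [xa _]].
    by move: E; rewrite Fa.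
  by rewrite cards0 subn0.
have hN : #|[set x | s' x != None]| = #|[set x | s x != None]| + size b.
  have -> : [set x | s' x != None] = [set x | s x != None] :|: [set x | x \in a].
    apply/setP=> x; rewrite !in_set; case: (boolP (x \in a)) => xa /=.
      by have [M -> _] := G1 x xa; rewrite orbT.
    by rewrite orbF hn.
  rewrite cardsU; have -> : [set x | s x != None] :&: [set x | x \in a] = set0.
    apply/setP=> x; rewrite !in_set; apply/negP=> /andP [E xa].
    by move: E; rewrite Fa.
  rewrite cards0 subn0 -sab; congr (_ + _).
  by rewrite (cardsE (mem a)); apply/card_uniqP.
rewrite hN; exact: (inv_step ub hl F4 inv).
Qed.

Definition rp (T : finType) (p q : {set T} * option T) : bool :=
  [forall x in p.1 :&: q.1, q.2 == Some x].

Lemma run_facts (T : finType) m (bs : seq ({set T} * option T))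
    (s out : T -> option 'I_m) :
  (forall B pu u, (B, pu) \in bs -> pu = Some u -> u \in B) ->
  pairwise (@rp T) bs ->
  (forall B pu x, (B, pu) \in bs -> x \in B -> s x != None -> pu = Some x) ->
  grun s bs out ->
  [/\ forall x, s x != None -> out x = s x,
      forall B pu x, (B,pu) \in bs -> x \in B -> out x != None,
      forall B pu x y, (B,pu) \in bs -> x \in B -> y \in B -> x != y ->
        out x != out y
    & InvL (load s) #|[set x | s x != None]| ->
      InvL (load out) #|[set x | out x != None]| ].
Proof.
elim: bs s => [|[B pu] bs IH] s Hu Hpw Hs /=.
  move=> Hout; split=> // inv.
  have E1 : forall M, load out M = load s M.
    by move=> M; rewrite /load; apply: eq_card => x; rewrite !in_set Hout.
  have E2 : [set x | out x != None] = [set x | s x != None].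
    by apply/setP=> x; rewrite !in_set Hout.
  rewrite E2 => t t0; rewrite /hc; under eq_finset do rewrite E1; exact: inv.
move=> [s1 [Hst Hrun]].
move: Hpw; rewrite /= => /andP [Hall Hpw].
have Hu0 : forall u, pu = Some u -> u \in B.
  by move=> u; apply: Hu; rewrite mem_head.
have Hs0 : forall x, x \in B -> s x != None -> pu = Some x.
  by move=> x; apply: Hs; rewrite mem_head.
have [S1 S2 S3 S4 S5] := step_facts Hu0 Hs0 Hst.
have Hu1 : forall B pu u, (B, pu) \in bs -> pu = Some u -> u \in B.
  by move=> B' pu' u H; apply: Hu; rewrite in_cons H orbT.
have Hs1 : forall B' pu' x, (B', pu') \in bs -> x \in B' -> s1 x != None -> pu' = Some x.
  move=> B' pu' x H xB' sx; case: (S2 x sx) => [sx0|xB].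
    by apply: (Hs B' pu' x) => //; rewrite in_cons H orbT.
  have := allP Hall _ H; rewrite /rp /= => /forallP /(_ x).
  by rewrite in_setI xB xB' /= => /eqP.
have [R1 R2 R3 R4] := IH s1 Hu1 Hpw Hs1 Hrun.
split.
- by move=> x sx; rewrite R1 ?S1 //; rewrite S1.
- move=> B' pu' x; rewrite in_cons => /orP [/eqP [-> _]|H] xB'.
    by rewrite R1; apply: S3.
  exact: R2 H xB'.
- move=> B' pu' x y; rewrite in_cons => /orP [/eqP [-> _]|H] xB' yB' xy.
    by rewrite !R1; [apply: S4 | apply: S3 | apply: S3].
  exact: R3 H xB' yB' xy.
by move=> inv; apply: R4; apply: S5.
Qed.

Lemma arith m d r n (l : 'I_m -> nat) : 2 <= m -> 1 <= n -> n = d*(m-1)+r ->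
  r <= m-2 -> InvL l n ->
  [/\ forall M, l M <= ceil_div n (m-1),
      r = 0 -> exists M, l M < ceil_div n (m-1)
    & 0 < r -> m - r <= #|[set M | l M < ceil_div n (m-1)]| ].
Proof.
move=> m2 n1 hn hr inv.
case: r hn hr => [|r'] hn hr.
  have hce : ceil_div n (m-1) = d.
    rewrite /ceil_div hn addn0 divnMDl; last lia.
    rewrite divn_small ?addn0 //; lia.
  rewrite hce; split=> //.
  - move=> M; rewrite leqNgt; apply/negP=> H.
    have hp : 0 < hc l d.+1 by rewrite /hc card_gt0; apply/set0Pn; exists M; rewrite inE.
    have := inv d.+1 isT hp; have : 1 <= hc l d.+1 by [].
    rewrite subn1 /=; nia.
  - move=> _; case: (pickP (fun M => l M < d)) => [M HM|H]; first by exists M.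
    have hd : 0 < d by nia.
    have E : hc l d = m.
      rewrite /hc -[RHS](card_ord m) -cardsT; apply: eq_card => M.
      by rewrite !inE leqNgt H.
    have hp : 0 < hc l d by rewrite E; lia.
    have := inv d hd hp; rewrite E; nia.
have hce : ceil_div n (m-1) = d.+1.
  rewrite /ceil_div hn.
  have -> : d * (m - 1) + r'.+1 + (m - 1).-1 = d.+1 * (m-1) + r' by nia.
  rewrite divnMDl; last lia.
  rewrite divn_small ?addn0 //; lia.
rewrite hce; split=> //.
- move=> M; rewrite leqNgt; apply/negP=> H.
  have hp : 0 < hc l d.+2 by rewrite /hc card_gt0; apply/set0Pn; exists M; rewrite inE.
  have := inv d.+2 isT hp; have : 1 <= hc l d.+2 by [].
  rewrite subn1 /=; nia.
- move=> _.
  have E : [set M | l M < d.+1] = ~: [set M | d.+1 <= l M].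
    by apply/setP=> M; rewrite !inE ltnNge.
  rewrite E; have := cardsC [set M | d.+1 <= l M]; rewrite card_ord => hC.
  case: (posnP (hc l d.+1)) => h0.
    by move: h0 hC; rewrite /hc => ->; lia.
  have := inv d.+1 isT h0; move: hC; rewrite /hc subn1 /=; nia.
Qed.

Definition cb (T : finType) (e : rel T) (C : {set T}) :=
  [forall a in C, forall b in C, (a != b) ==> e a b].

Lemma cbP (T : finType) (e : rel T) C : reflect (is_clique e C) (cb e C).
Proof.
apply: (iffP idP) => [H a b aC bC ab | H].
  by move/forall_inP: H => /(_ a aC) /forall_inP /(_ b bC) /implyP; apply.
apply/forall_inP => a aC; apply/forall_inP => b bC; apply/implyP; exact: H.
Qed.

Lemma ext_block (T : finType) (e : rel T) (C0 : {set T}) x :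
  is_clique e C0 -> x \in C0 -> exists B, is_block e B /\ C0 \subset B.
Proof.
move=> cC0 xC0.
have P0 : cb e C0 && (C0 \subset C0) by rewrite subxx andbT; apply/cbP.
case: (@arg_maxnP _ C0 (fun C => cb e C && (C0 \subset C)) (fun C => #|C|) P0) => B /andP [cB sub] Hmax.
exists B; split=> //; split.
- by apply/set0Pn; exists x; exact: (subsetP sub).
- exact/cbP.
move=> C cC BC; apply/eqP; rewrite eq_sym eqEcard BC /=.
apply: Hmax; rewrite (subset_trans sub BC) andbT; exact/cbP.
Qed.

Definition rb (T : finType) (par : bc_node T -> option (bc_node T)) (a b : bc_node T) :=
  match a, b with
  | inl B1, inl B2 => rp (B1, parent_cut par a) (B2, parent_cut par b)
  | _, _ => true end.

Lemma mem_block_seq (T : finType) par (s : seq (bc_node T)) B pu :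
  ((B, pu) \in block_seq par s) = (inl B \in s) && (pu == parent_cut par (inl B)).
Proof.
rewrite /block_seq mem_pmap; apply/mapP/andP.
  by case=> -[B'|v] ys //= [-> ->].
by case=> H /eqP ->; exists (inl B).
Qed.

Lemma pw_block (T : finType) par (s : seq (bc_node T)) :
  pairwise (rb par) s -> pairwise (@rp T) (block_seq par s).
Proof.
elim: s => //= y s IH /andP [Ha Hp].
case: y Ha => [B|v] Ha /=; last exact: IH.
rewrite IH // andbT; apply/allP => -[B2 pu2]; rewrite mem_block_seq => /andP [H2 /eqP ->].
exact: (allP Ha _ H2).
Qed.

Lemma pw_s (T : finType) (e : rel T) par (s : seq (bc_node T)) :
  rooting e par -> preorder e par s -> pairwise (rb par) s.
Proof.
move=> [R1 R2 _] [us Hin Hdesc _].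
apply/(pairwiseP (inl set0)) => i j; rewrite !inE => ilt jlt ij.
case Ea: (nth (inl set0) s i) => [B1|v] //; case Eb: (nth (inl set0) s j) => [B2|w] //=.
have B1s : inl B1 \in s by rewrite -Ea mem_nth.
have B2s : inl B2 \in s by rewrite -Eb mem_nth.
have bB1 : is_block e B1 by have := (Hin (inl B1)).1 B1s.
have bB2 : is_block e B2 by have := (Hin (inl B2)).1 B2s.
have iB1 : index (inl B1) s = i by rewrite -Ea index_uniq.
have iB2 : index (inl B2) s = j by rewrite -Eb index_uniq.
have B12 : B1 != B2.
  apply/negP=> /eqP E12; move: ij; by rewrite -iB1 -iB2 E12 ltnn.
apply/forall_inP => x; rewrite in_setI => /andP [xB1 xB2] /=.
have cx : is_cut e x by exists B1, B2.
have [H|H] := R2 (inl B2) (inr x) bB2 cx xB2.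
  by rewrite /parent_cut H.
have [H'|H'] := R2 (inl B1) (inr x) bB1 cx xB1; last first.
  by move: H'; rewrite H => -[E]; move: B12; rewrite E eqxx.
have D : desc par (inl B2) (inl B1).
  apply: (connect_trans (y := inr x)); apply: connect1; by rewrite /= ?H ?H'.
have := Hdesc _ _ B2s B1s D; rewrite iB1 iB2 leqNgt ij //.
Qed.

Lemma Hu_block (T : finType) (e : rel T) par (s : seq (bc_node T)) :
  rooting e par ->
  forall B pu u, (B, pu) \in block_seq par s -> pu = Some u -> u \in B.
Proof.
move=> [R1 _ _] B pu u; rewrite mem_block_seq => /andP [_ /eqP ->].
rewrite /parent_cut; case E: (par (inl B)) => [[B'|v]|] //= [<-].
by have [_ _] := R1 _ _ E.
Qed.
Unset Implicit Arguments.

Theorem mainTheorem3 (T : finType) (e : rel T) (m d r : nat)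
    (out : T -> option 'I_m) :
  symmetric e -> irreflexive e -> block_graph e ->
  2 <= m -> 1 <= #|T| -> clique_bound e m ->
  #|T| = d * (m - 1) + r -> r <= m - 2 ->
  greedy_output e out ->
  [/\ forall x, out x != None,
      forall x y, e x y -> out x != out y,
      forall M, load out M <= ceil_div #|T| (m - 1),
      r = 0 -> exists M, load out M < ceil_div #|T| (m - 1)
    & 0 < r -> m - r <= #|[set M | load out M < ceil_div #|T| (m - 1)]|].
Proof.
move=> Hsym Hirr _ m2 n1 _ hn hr [par [s [Hroot Hpre Hrun]]].
have Hs0 : forall B pu x, (B, pu) \in block_seq par s -> x \in B ->
    (fun _ : T => @None 'I_m) x != None -> pu = Some x by [].
have [R1 R2 R3 R4] := run_facts (Hu_block Hroot) (pw_block (pw_s Hroot Hpre)) Hs0 Hrun.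
have inbs : forall B, is_block e B -> (B, parent_cut par (inl B)) \in block_seq par s.
  move=> B bB; rewrite mem_block_seq eqxx andbT.
  by case: Hpre => _ Hin _ _; apply/(Hin (inl B)).
have all : forall x, out x != None.
  move=> x.
  have cx : is_clique e [set x].
    by move=> a b; rewrite !inE => /eqP -> /eqP ->; rewrite eqxx.
  have [B [bB sB]] := ext_block cx (set11 x).
  by apply: (R2 _ _ _ (inbs B bB)); apply: (subsetP sB); rewrite set11.
have inv0 : InvL (load (fun _ : T => @None 'I_m))
                 #|[set x | (fun _ : T => @None 'I_m) x != None]|.
  move=> t t0; rewrite /hc.
  have -> : [set M | t <= load (fun _ : T => @None 'I_m) M] = set0.
    apply/setP=> M; rewrite !inE /load.
    have -> : [set x : T | None == Some M] = set0 by apply/setP=> x; rewrite !inE.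
    by rewrite cards0 leqNgt t0.
  by rewrite cards0.
have inv := R4 inv0.
have EN : #|[set x | out x != None]| = #|T|.
  rewrite -cardsT; apply: eq_card => x; by rewrite !inE all.
rewrite EN in inv.
have [A1 A2 A3] := arith m2 n1 hn hr inv.
split=> //.
move=> x y exy.
have xy : x != y by apply/negP=> /eqP E; move: exy; rewrite E Hirr.
have cxy : is_clique e [set x; y].
  move=> a b; rewrite !inE => /orP [] /eqP -> /orP [] /eqP ->; rewrite ?eqxx //.
  by rewrite Hsym.
have [B [bB sB]] := ext_block cxy (setU11 x [set y]).
apply: (R3 _ _ _ _ (inbs B bB)) => //; apply: (subsetP sB); rewrite !inE eqxx ?orbT //.
Qed.
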